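(* Let \[K_2=\langle x,t \mid [x,\ txt^{-1}\,x\,tx^{-1}t^{-1}],\ t^2\rangle.\] Then the subgroup $\langle x, txt^{-1}\rangle$ of $K_2$ is isomorphic to the (integral) Heisenberg group $\langle a,b\mid [a,[a,b]],[b,[a,b]]\rangle$, and it has index $2$ in $K_2$ with transversal $\{1,t\}$.
   Context: Commutator convention: $[u,v]=uvu^{-1}v^{-1}$; a relator $r$ in a presentation means $r=1$. *)

(* Defs.v *)
Record group := Group {
  carrier :> Type;
  mul : carrier -> carrier -> carrier;
  one : carrier;
  inv : carrier -> carrier;
  mulA : forall x y z, mul x (mul y z) = mul (mul x y) z;
  mul1g : forall x, mul one x = x;
  mulVg : forall x, mul (inv x) x = one
}.
Arguments mul {g} _ _.
Arguments one {g}.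
Arguments inv {g} _.

Definition comm {G : group} (u v : G) : G :=
  mul (mul (mul u v) (inv u)) (inv v).

Definition is_hom {G H : group} (f : G -> H) : Prop :=
  forall u v : G, f (mul u v) = mul (f u) (f v).

Inductive gen {G : group} (S : G -> Prop) : G -> Prop :=
| gen_base : forall g, S g -> gen S g
| gen_one : gen S one
| gen_mul : forall u v, gen S u -> gen S v -> gen S (mul u v)
| gen_inv : forall u, gen S u -> gen S (inv u).

Definition relations2 := forall H : group, H -> H -> Prop.

(* (G, a, b) is a presentation <a, b | rels>: G is generated by a, b, the
   relations hold, and G has the universal property of the presented group. *)
Definition presents2 (rels : relations2) (G : group) (a b : G) : Prop :=
  (forall g : G, gen (fun y => y = a \/ y = b) g) /\
  rels G a b /\
  (forall (H : group) (a' b' : H), rels H a' b' ->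
     exists f : G -> H, is_hom f /\ f a = a' /\ f b = b').

Definition K2_rels : relations2 := fun H x t =>
  comm x (mul (mul (mul (mul (mul (mul t x) (inv t)) x) t) (inv x)) (inv t)) = one
  /\ mul t t = one.

Definition Heis_rels : relations2 := fun H a b =>
  comm a (comm a b) = one /\ comm b (comm a b) = one.

(* Main.v *)
Require Import Defs.
From Stdlib Require Import Bool Setoid.

Infix "**" := mul (at level 40, left associativity).

Lemma mulgV (G : group) (x : G) : x ** inv x = one.
Proof.
  rewrite <- (mul1g G (x ** inv x)).
  rewrite <- (mulVg G (inv x)) at 1.
  rewrite <- (mulA G (inv (inv x))).
  rewrite (mulA G (inv x) x (inv x)), mulVg, mul1g, mulVg. reflexivity.
Qed.
Lemma mulg1 (G : group) (x : G) : x ** one = x.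
Proof. rewrite <- (mulVg G x), mulA, mulgV, mul1g. reflexivity. Qed.
Lemma mulKg (G : group) (x y : G) : inv x ** (x ** y) = y.
Proof. rewrite mulA, mulVg, mul1g. reflexivity. Qed.
Lemma mulKVg (G : group) (x y : G) : x ** (inv x ** y) = y.
Proof. rewrite mulA, mulgV, mul1g. reflexivity. Qed.
Lemma mulgK (G : group) (x y : G) : x ** y ** inv y = x.
Proof. rewrite <- mulA, mulgV, mulg1. reflexivity. Qed.
Lemma mulgKV (G : group) (x y : G) : x ** inv y ** y = x.
Proof. rewrite <- mulA, mulVg, mulg1. reflexivity. Qed.
Lemma cancel_l (G : group) (x y z : G) : x ** y = x ** z -> y = z.
Proof. intro H. rewrite <- (mulKg G x y), H, mulKg. reflexivity. Qed.
Lemma cancel_r (G : group) (x y z : G) : y ** x = z ** x -> y = z.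
Proof. intro H. rewrite <- (mulgK G y x), H, mulgK. reflexivity. Qed.
Lemma inv_uniq (G : group) (x y : G) : x ** y = one -> inv x = y.
Proof. intro H. rewrite <- (mulg1 G (inv x)), <- H, mulKg. reflexivity. Qed.
Lemma invK (G : group) (x : G) : inv (inv x) = x.
Proof. apply inv_uniq. apply mulVg. Qed.
Lemma invM (G : group) (x y : G) : inv (x ** y) = inv y ** inv x.
Proof. apply inv_uniq. rewrite mulA, mulgK, mulgV. reflexivity. Qed.
Lemma inv1 (G : group) : inv (@one G) = one.
Proof. apply inv_uniq. apply mul1g. Qed.

Definition commute {G : group} (u v : G) := u ** v = v ** u.

Lemma comm_one_iff (G : group) (u v : G) : comm u v = one <-> commute u v.
Proof.
  unfold comm, commute. split; intro H.
  - assert (E : u ** v ** inv u = v).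
    { rewrite <- (mulgKV G (u ** v ** inv u) v), H, mul1g. reflexivity. }
    transitivity (u ** v ** inv u ** u). rewrite mulgKV; reflexivity.
    rewrite E. reflexivity.
  - rewrite H, mulgK, mulgV. reflexivity.
Qed.

Lemma commute_inv (G : group) (u w : G) : commute u w -> commute u (inv w).
Proof.
  unfold commute. intro H. apply (cancel_l G w).
  rewrite mulKVg, mulA, <- H, mulgK. reflexivity.
Qed.
Lemma commute_inv_iff (G : group) (u w : G) : commute u (inv w) <-> commute u w.
Proof.
  split; intro H. rewrite <- (invK G w). apply commute_inv; exact H.
  apply commute_inv; exact H.
Qed.
Lemma commute_mul_self (G : group) (x w : G) : commute x (x ** w) <-> commute x w.
Proof.
  unfold commute. split; intro H.
  - apply (cancel_l G x). rewrite H, mulA. reflexivity.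
  - rewrite <- (mulA G x w x), H. reflexivity.
Qed.
Lemma commute_sym (G : group) (u w : G) : commute u w -> commute w u.
Proof. unfold commute; intro H; symmetry; exact H. Qed.
Lemma commute_mul_inv_self (G : group) (y w : G) :
  commute y (w ** inv y) <-> commute y w.
Proof.
  rewrite <- commute_inv_iff, invM, invK, commute_mul_self, commute_inv_iff.
  reflexivity.
Qed.

Lemma conj_inv (G : group) (t x : G) : inv (t ** x ** inv t) = t ** inv x ** inv t.
Proof. rewrite !invM, invK, mulA. reflexivity. Qed.

Lemma elem_eq (G : group) (t x : G) :
  t ** x ** inv t ** x ** t ** inv x ** inv t
  = (t ** x ** inv t) ** x ** inv (t ** x ** inv t).
Proof. rewrite conj_inv. repeat rewrite (mulA G). reflexivity. Qed.

Lemma heis_iff (G : group) (x y : G) :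
  commute x (y ** x ** inv y) <-> commute x (comm x y).
Proof.
  unfold comm.
  assert (E : x ** y ** inv x ** inv y = x ** inv (y ** x ** inv y)).
  { rewrite conj_inv. repeat rewrite (mulA G). reflexivity. }
  rewrite E, commute_mul_self, commute_inv_iff. reflexivity.
Qed.

Lemma heis_iff2 (G : group) (x y : G) :
  commute y (x ** y ** inv x) <-> commute y (comm x y).
Proof. unfold comm. rewrite commute_mul_inv_self. reflexivity. Qed.

Lemma hom_one (G H : group) (f : G -> H) : is_hom f -> f one = one.
Proof.
  intro hf. apply (cancel_l H (f one)). rewrite <- hf, !mulg1. reflexivity.
Qed.
Lemma hom_inv (G H : group) (f : G -> H) : is_hom f -> forall u, f (inv u) = inv (f u).
Proof.
  intros hf u. symmetry. apply inv_uniq. rewrite <- hf, mulgV. apply hom_one; exact hf.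
Qed.
Lemma hom_commute (G H : group) (f : G -> H) : is_hom f ->
  forall u v, commute u v -> commute (f u) (f v).
Proof. unfold commute. intros hf u v E. rewrite <- !hf, E. reflexivity. Qed.
Lemma hom_comm (G H : group) (f : G -> H) : is_hom f ->
  forall u v, f (comm u v) = comm (f u) (f v).
Proof. intros hf u v. unfold comm. rewrite !hf, !(hom_inv _ _ f hf). reflexivity. Qed.

Lemma hom_agree (G H : group) (S : G -> Prop) (f g : G -> H) :
  is_hom f -> is_hom g -> (forall z, S z -> f z = g z) ->
  forall w, gen S w -> f w = g w.
Proof.
  intros hf hg E w Hw. induction Hw.
  - apply E; assumption.
  - rewrite (hom_one _ _ f hf), (hom_one _ _ g hg). reflexivity.
  - rewrite hf, hg, IHHw1, IHHw2. reflexivity.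
  - rewrite (hom_inv _ _ f hf), (hom_inv _ _ g hg), IHHw. reflexivity.
Qed.
Definition sw {Hs : group} (sg : Hs -> Hs) (e : bool) (h : Hs) : Hs :=
  if e then sg h else h.

Definition pmul {Hs : group} (sg : Hs -> Hs) (p q : Hs * bool) : Hs * bool :=
  (fst p ** sw sg (snd p) (fst q), xorb (snd p) (snd q)).
Definition pinv {Hs : group} (sg : Hs -> Hs) (p : Hs * bool) : Hs * bool :=
  (sw sg (snd p) (inv (fst p)), snd p).

Lemma sw_hom (Hs : group) (sg : Hs -> Hs) : is_hom sg -> forall e u v,
  sw sg e (u ** v) = sw sg e u ** sw sg e v.
Proof. intros h [|] u v; simpl; [apply h | reflexivity]. Qed.
Lemma sw_sw (Hs : group) (sg : Hs -> Hs) : (forall h, sg (sg h) = h) -> forall e1 e2 h,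
  sw sg e1 (sw sg e2 h) = sw sg (xorb e1 e2) h.
Proof. intros H [|] [|] h; simpl; try rewrite H; reflexivity. Qed.
Lemma sw_one (Hs : group) (sg : Hs -> Hs) : is_hom sg -> forall e, sw sg e one = one.
Proof. intros h [|]; simpl; [apply hom_one; exact h | reflexivity]. Qed.

Lemma pmulA (Hs : group) (sg : Hs -> Hs) (h1 : is_hom sg) (h2 : forall h, sg (sg h) = h) :
  forall p q r, pmul sg p (pmul sg q r) = pmul sg (pmul sg p q) r.
Proof.
  intros [p e] [q f] [r g]. unfold pmul; simpl.
  rewrite (sw_hom _ _ h1), (sw_sw _ _ h2), mulA, xorb_assoc. reflexivity.
Qed.
Lemma pmul1 (Hs : group) (sg : Hs -> Hs) :
  forall p, pmul sg (one, false) p = p.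
Proof. intros [p e]. unfold pmul; simpl. rewrite mul1g. reflexivity. Qed.
Lemma pmulV (Hs : group) (sg : Hs -> Hs) (h1 : is_hom sg) :
  forall p, pmul sg (pinv sg p) p = (one, false).
Proof.
  intros [p e]. unfold pmul, pinv; simpl.
  rewrite <- (sw_hom _ _ h1), mulVg, (sw_one _ _ h1), xorb_nilpotent. reflexivity.
Qed.

Definition semidir (Hs : group) (sg : Hs -> Hs) (h1 : is_hom sg)
  (h2 : forall h, sg (sg h) = h) : group :=
  Group (Hs * bool) (pmul sg) (one, false) (pinv sg) (pmulA Hs sg h1 h2)
    (pmul1 Hs sg) (pmulV Hs sg h1).

Lemma z2A : forall a b c : bool, xorb a (xorb b c) = xorb (xorb a b) c.
Proof. destruct a, b, c; reflexivity. Qed.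
Lemma z21 : forall a : bool, xorb false a = a.
Proof. destruct a; reflexivity. Qed.
Lemma z2V : forall a : bool, xorb ((fun x => x) a) a = false.
Proof. destruct a; reflexivity. Qed.
Definition Z2 : group := Group bool xorb false (fun x => x) z2A z21 z2V.

Lemma K2_of_heis (G : group) (x t : G) : t ** t = one ->
  commute x (comm x (t ** x ** inv t)) -> K2_rels G x t.
Proof.
  intros Ht Hc. split; [|exact Ht].
  rewrite elem_eq, comm_one_iff, heis_iff. exact Hc.
Qed.

Theorem lemma4p2 :
  forall (K : group) (x t : K), presents2 K2_rels K x t ->
  let S := gen (fun y => y = x \/ y = mul (mul t x) (inv t)) in
  (* S is isomorphic to the Heisenberg group *)
  (forall (Hs : group) (a b : Hs), presents2 Heis_rels Hs a b ->
     exists f : Hs -> K, is_hom f /\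
       (forall u v, f u = f v -> u = v) /\
       (forall g, S g <-> exists h, f h = g)) /\
  (* index 2 with transversal {1, t}: K = S u S t and S t <> S *)
  (forall g : K, S g \/ S (mul g (inv t))) /\
  ~ S t.
Proof.
  intros K x t [Kgen [[Krel Ktt] Kuniv]] S.
  set (y := t ** x ** inv t).
  assert (tinv : inv t = t) by (apply inv_uniq; exact Ktt).
  assert (ct_hom : is_hom (fun z => t ** z ** inv t)).
  { intros u v. repeat rewrite (mulA K). rewrite mulgKV. reflexivity. }
  assert (cty : t ** y ** inv t = x).
  { unfold y. rewrite tinv. repeat rewrite (mulA K). rewrite Ktt, mul1g.
    rewrite <- (mulA K x t t), Ktt, mulg1. reflexivity. }
  assert (c1 : commute x (y ** x ** inv y)).
  { rewrite elem_eq, comm_one_iff in Krel. exact Krel. }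
  assert (c2 : commute y (x ** y ** inv x)).
  { pose proof (hom_commute _ _ _ ct_hom _ _ c1) as C. simpl in C.
    rewrite ct_hom, ct_hom, (hom_inv _ _ _ ct_hom), cty in C. exact C. }
  assert (HK : Heis_rels K x y).
  { split; apply comm_one_iff; [apply heis_iff | apply heis_iff2]; assumption. }
  assert (Sx : S x) by (apply gen_base; left; reflexivity).
  assert (Sy : S y) by (apply gen_base; right; reflexivity).
  split; [|split].
  - intros Hs a b [Hgen [Hrel Huniv]].
    destruct (Huniv K x y HK) as [f [fhom [fa fb]]].
    assert (Hba : Heis_rels Hs b a).
    { destruct Hrel as [r1 r2].
      assert (E : comm b a = inv (comm a b)).
      { unfold comm. rewrite !invM, !invK. repeat rewrite (mulA Hs). reflexivity. }
      split; apply comm_one_iff; rewrite E; apply commute_inv; apply comm_one_iff;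
        assumption. }
    destruct (Huniv Hs b a Hba) as [sg [sghom [sga sgb]]].
    assert (sgsg : forall h, sg (sg h) = h).
    { intro h. apply (hom_agree Hs Hs (fun y => y = a \/ y = b) (fun h => sg (sg h)) (fun h => h)).
      - intros u v. rewrite !sghom. reflexivity.
      - intros u v. reflexivity.
      - intros z [-> | ->]. rewrite sga, sgb; reflexivity. rewrite sgb, sga; reflexivity.
      - apply Hgen. }
    set (P := semidir Hs sg sghom sgsg).
    assert (jhom : is_hom (fun h : Hs => ((h, false) : P))).
    { intros u v. simpl. unfold pmul. simpl. reflexivity. }
    assert (HP : K2_rels P (a, false) (one, true)).
    { apply K2_of_heis.
      - simpl. unfold pmul; simpl. rewrite (hom_one _ _ _ sghom), (mulg1 Hs). reflexivity.
      - assert (EY : ((one, true) : P) ** (a, false) ** inv ((one, true) : P) = (b, false)).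
        { simpl. unfold pmul, pinv; simpl.
          rewrite sga, inv1, (hom_one _ _ _ sghom). rewrite (hom_one _ _ _ sghom), (mul1g Hs), (mulg1 Hs). reflexivity. }
        rewrite EY.
        rewrite <- (hom_comm _ _ _ jhom). apply (hom_commute _ _ _ jhom).
        apply comm_one_iff. apply Hrel. }
    destruct (Kuniv P _ _ HP) as [g [ghom [gx gt]]].
    assert (gf : forall h, g (f h) = ((h, false) : P)).
    { intro h. apply (hom_agree Hs P (fun y => y = a \/ y = b) (fun h => g (f h)) (fun h : Hs => ((h, false) : P))).
      - intros u v. rewrite fhom, ghom. reflexivity.
      - exact jhom.
      - intros z [-> | ->].
        + rewrite fa, gx. reflexivity.
        + rewrite fb. unfold y. rewrite !ghom, (hom_inv _ _ _ ghom), gx, gt.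
          simpl. unfold pmul, pinv; simpl.
          rewrite sga, inv1, !(hom_one _ _ _ sghom), (mul1g Hs), (mulg1 Hs). reflexivity.
      - apply Hgen. }
    exists f. split; [exact fhom | split].
    + intros u v E. apply (f_equal g) in E. rewrite !gf in E. injection E; auto.
    + intro w. split.
      * intro Hw. induction Hw as [w [-> | ->] | | u v _ [h1 E1] _ [h2 E2] | u _ [h E]].
        -- exists a; exact fa.
        -- exists b; exact fb.
        -- exists one. apply hom_one; exact fhom.
        -- exists (h1 ** h2). rewrite fhom, E1, E2. reflexivity.
        -- exists (inv h). rewrite (hom_inv _ _ _ fhom), E. reflexivity.
      * intros [h <-]. pose proof (Hgen h) as Hh. induction Hh as [w [-> | ->] | | u v _ IH1 _ IH2 | u _ IH].
        -- rewrite fa; exact Sx.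
        -- rewrite fb; exact Sy.
        -- rewrite (hom_one _ _ _ fhom). apply gen_one.
        -- rewrite fhom. apply gen_mul; assumption.
        -- rewrite (hom_inv _ _ _ fhom). apply gen_inv; assumption.
  - assert (Sct : forall s, S s -> S (t ** s ** t)).
    { intros s Hs. rewrite <- tinv at 2. induction Hs as [w [-> | ->] | | u v _ IH1 _ IH2 | u _ IH].
      + exact Sy.
      + change (S (t ** y ** inv t)). rewrite cty. exact Sx.
      + rewrite mulg1, mulgV. apply gen_one.
      + rewrite ct_hom. apply gen_mul; assumption.
      + rewrite (hom_inv _ _ _ ct_hom). apply gen_inv; assumption. }
    assert (mtt : forall w, w ** t ** t = w).
    { intro w. rewrite <- mulA, Ktt, mulg1. reflexivity. }
    rewrite tinv. intro w. pose proof (Kgen w) as Hw.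
    induction Hw as [w [-> | ->] | | u v _ [IH1|IH1] _ [IH2|IH2] | u _ [IH|IH]].
    + left; exact Sx.
    + right. rewrite Ktt. apply gen_one.
    + left; apply gen_one.
    + left; apply gen_mul; assumption.
    + right. rewrite <- mulA. apply gen_mul; assumption.
    + right. replace (u ** v ** t) with ((u ** t) ** (t ** v ** t)).
      apply gen_mul; [assumption | apply Sct; assumption].
      repeat rewrite (mulA K). rewrite mtt. reflexivity.
    + left. replace (u ** v) with ((u ** t) ** (t ** (v ** t) ** t)).
      apply gen_mul; [assumption | apply Sct; assumption].
      repeat rewrite (mulA K). rewrite !mtt. reflexivity.
    + left; apply gen_inv; assumption.
    + right. replace (inv u ** t) with (t ** inv (u ** t) ** t).
      apply Sct; apply gen_inv; assumption.
      rewrite invM, tinv, mulA, Ktt, mul1g. reflexivity.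
  - assert (HZ : K2_rels Z2 false true) by (split; reflexivity).
    destruct (Kuniv Z2 false true HZ) as [g [ghom [gx gt]]].
    assert (H0 : forall w, S w -> g w = false).
    { intros w Hw. induction Hw as [w [-> | ->] | | u v _ IH1 _ IH2 | u _ IH].
      + exact gx.
      + rewrite !ghom, (hom_inv _ _ _ ghom), gx, gt. reflexivity.
      + apply (hom_one _ _ _ ghom).
      + rewrite ghom, IH1, IH2. reflexivity.
      + rewrite (hom_inv _ _ _ ghom), IH. reflexivity. }
    intro St. apply H0 in St. rewrite gt in St. discriminate.
Qed.
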